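(* For every $n\ge 10$ there exist two graphs $G_n,H_n$, each on $2n$ vertices, and a graph $F$ such that, with $\mathcal{F}=\{F\}$, for every number of rounds $T>0$, $$\big\|\overline{\phi^{(T)}_{\mathsf{WL},\mathcal{F}}}(G_n)-\overline{\phi^{(T)}_{\mathsf{WL},\mathcal{F}}}(H_n)\big\|<\big\|\overline{\phi^{(T)}_{\mathsf{WL}}}(G_n)-\overline{\phi^{(T)}_{\mathsf{WL}}}(H_n)\big\|.$$
   Context: Graphs are finite, simple, undirected, unlabeled. $1$-WL: $C^1_0$ constant, $C^1_t(v)=\mathsf{RELABEL}(C^1_{t-1}(v),\{\!\{C^1_{t-1}(u):u\in N(v)\}\!\})$ with a fixed injective $\mathsf{RELABEL}$ shared by all graphs. $1$-WL$_{\mathcal{F}}$: same update with initial colour $(\ell_F(v))_{F\in\mathcal{F}}$, $\ell_F(v)=1$ if $v$ lies in some vertex set $X$ with induced subgraph $G[X]$ isomorphic to $F$, else $0$. $\phi_t(G)$ (resp. $\phi_{\mathcal{F},t}(G)$) counts the vertices of $G$ of each colour occurring at round $t$ in the graphs considered; $\phi^{(T)}_{\mathsf{WL}}(G)$, $\phi^{(T)}_{\mathsf{WL},\mathcal{F}}(G)$ are concatenations over rounds $0,\dots,T$; the bar denotes normalisation to unit Euclidean norm; $\|\cdot\|$ is the Euclidean norm. *)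

(* Defs.v *)
From HB Require Import structures.
From mathcomp Require Import all_boot all_order all_algebra.
From mathcomp Require Import Rstruct.
From Stdlib Require Rdefinitions.
Notation R := Rdefinitions.R.
Set Implicit Arguments. Unset Strict Implicit. Unset Printing Implicit Defensive.
Import Order.TTheory GRing.Theory Num.Theory.

Definition simple_graph (V : finType) (e : rel V) : Prop :=
  symmetric e /\ irreflexive e.

Local Open Scope ring_scope.

(* Colours: finite trees (a countable type), shared by all graphs. *)
Definition colour := GenTree.tree bool.

(* The fixed injective RELABEL: a colour together with the multiset of
   neighbour colours, the multiset encoded canonically as the list sorted
   by the (injective) pickle code. *)
Definition RELABEL (c : colour) (M : seq colour) : colour :=
  GenTree.Node 0 (c :: sort (fun a b : colour => (pickle a <= pickle b)%N) M).

Fixpoint wl (V : finType) (e : rel V) (init : V -> colour) (t : nat) (v : V)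
  : colour :=
  match t with
  | 0 => init v
  | t'.+1 => RELABEL (wl e init t' v) [seq wl e init t' u | u <- enum V & e v u]
  end.

Definition init_const (V : finType) : V -> colour := fun _ => GenTree.Node 1 [::].

(* ell_F(v) = 1 iff v lies in a vertex set X with G[X] isomorphic to F,
   i.e. there is an injective map f from V(F) onto X preserving adjacency
   and non-adjacency (induced), with v in its image. *)
Definition ell (k : nat) (eF : rel 'I_k) (V : finType) (e : rel V) (v : V) : bool :=
  [exists f : {ffun 'I_k -> V},
     [&& injectiveb f, v \in codom f &
         [forall i, forall j, eF i j == e (f i) (f j)]]].

(* Initial colour for 1-WL_F with F = {F}: the tuple (ell_F(v))_{F in F}. *)
Definition init_F (k : nat) (eF : rel 'I_k) (V : finType) (e : rel V) : V -> colour :=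
  fun v => GenTree.Node 1 [:: GenTree.Leaf (ell eF e v)].

Definition colours_at (V W : finType) (eG : rel V) (iG : V -> colour)
  (eH : rel W) (iH : W -> colour) (t : nat) : seq colour :=
  undup ([seq wl eG iG t v | v <- enum V] ++ [seq wl eH iH t w | w <- enum W]).

(* phi^{(T)}(G) and phi^{(T)}(H): concatenation over rounds 0..T of the
   colour-count histograms, indexed by the colours occurring in G or H. *)
Definition feat_pair (V W : finType) (eG : rel V) (iG : V -> colour)
  (eH : rel W) (iH : W -> colour) (T : nat) : seq R * seq R :=
  (flatten [seq [seq (#|[pred v | wl eG iG t v == c]|)%:R : R
                  | c <- colours_at eG iG eH iH t] | t <- iota 0 T.+1],
   flatten [seq [seq (#|[pred w | wl eH iH t w == c]|)%:R : R
                  | c <- colours_at eG iG eH iH t] | t <- iota 0 T.+1]).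

Definition enorm (s : seq R) : R := Num.sqrt (\sum_(x <- s) x ^+ 2).

Definition normdist (p : seq R * seq R) : R :=
  Num.sqrt (\sum_(xy <- zip p.1 p.2)
              (xy.1 / enorm p.1 - xy.2 / enorm p.2) ^+ 2).

(* Main.v *)
Require Import Defs.
From mathcomp Require Import all_boot all_order all_algebra.
From mathcomp Require Import Rstruct ring lra zify.
Import Order.TTheory GRing.Theory Num.Theory.

Fixpoint seqc (d : nat) (c0 : colour) (t : nat) : colour :=
  match t with 0 => c0 | t'.+1 => RELABEL (seqc d c0 t') (nseq d (seqc d c0 t')) end.

Lemma sort_nseq d (c : colour) :
  sort (fun a b : colour => (pickle a <= pickle b)%N) (nseq d c) = nseq d c.
Proof.
apply: sorted_sort; first by move=> a b c' /leq_trans; apply.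
by elim: d => //= -[|d] //= ->; rewrite leqnn.
Qed.

Lemma card_val (N : nat) (P : pred nat) :
  #|[pred v : 'I_N | P (val v)]| = count P (iota 0 N).
Proof.
rewrite -val_enum_ord count_map -size_filter cardE /enum_mem filter_predT.
by [].
Qed.

Lemma wl_class (V : finType) (e : rel V) (init : V -> colour) (cls : V -> nat)
  (deg : nat -> nat) (c0 : nat -> colour) :
  (forall v, init v = c0 (cls v)) ->
  (forall v u, e v u -> cls u = cls v) ->
  (forall v, #|[pred u | e v u]| = deg (cls v)) ->
  forall t v, wl e init t v = seqc (deg (cls v)) (c0 (cls v)) t.
Proof.
move=> hi hc hd; elim=> [|t IH] v /=; first exact: hi.
rewrite IH; congr RELABEL.
have -> : [seq wl e init t u | u <- enum V & e v u] =
          [seq seqc (deg (cls v)) (c0 (cls v)) t | u <- enum V & e v u].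
  by apply/eq_in_map => u; rewrite mem_filter => /andP[/hc h _]; rewrite IH h.
set x := seqc _ _ t.
have -> : [seq x | u <- enum V & e v u] = nseq (size [seq u <- enum V | e v u]) x.
  by elim: [seq u <- enum V | e v u] => //= a l ->.
congr nseq.
by rewrite -(hd v) cardE /enum_mem filter_predT.
Qed.

Definition E7 : seq (nat * nat) :=
  [:: (0,1); (1,2); (0,2); (3,4); (4,5); (5,6); (3,6)]%N.
Definition hedge (x y : nat) : bool :=
  [&& x < 7, y < 7 & ((x, y) \in E7) || ((y, x) \in E7)].
Definition eHn (N : nat) : rel 'I_N := fun u v => hedge u v.
Definition eGn (N : nat) : rel 'I_N := fun _ _ => false.
Arguments eHn {N}. Arguments eGn {N}.
Definition eF3 : rel 'I_3 := fun i j => i != j.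
Definition clsn (x : nat) : nat := if x < 3 then 0 else if x < 7 then 1 else 2.

Lemma finN n (P : nat -> bool) : all P (iota 0 n) -> forall x, x < n -> P x.
Proof. by move=> /allP h x hx; apply: h; rewrite mem_iota. Qed.
Definition fin7 := finN 7.

Lemma hedge_irr x : hedge x x = false.
Proof.
case: (ltnP x 7) => hx; last by rewrite /hedge (ltnNge x 7) hx.
apply/negbTE; move: x hx; apply: (fin7 (fun x => ~~ hedge x x)); by vm_compute.
Qed.

Lemma hedge_sym x y : hedge x y = hedge y x.
Proof. by rewrite /hedge; case: (x < 7); case: (y < 7) => //=; rewrite orbC. Qed.

Lemma hedge_lt x y : hedge x y -> (x < 7) && (y < 7).
Proof. by case/and3P => -> ->. Qed.

Lemma hedge_cls x y : hedge x y -> clsn y = clsn x.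
Proof.
move=> h; have /andP[hx hy] := hedge_lt _ _ h; suff H : hedge x y ==> (clsn y == clsn x) by move: H; rewrite h => /eqP.
clear h.
move: y hy; apply: (fin7 (fun y => hedge x y ==> (clsn y == clsn x))).
move: x hx; apply: (fin7 (fun x => all (fun y => hedge x y ==> (clsn y == clsn x)) (iota 0 7))).
by vm_compute.
Qed.

Lemma hedge_tri x y z : hedge x y -> hedge y z -> hedge x z -> x < 3.
Proof.
move=> h1 h2 h3; have /andP[hx hy] := hedge_lt _ _ h1; have /andP[_ hz] := hedge_lt _ _ h2.
suff H : hedge x y ==> hedge y z ==> hedge x z ==> (x < 3) by move: H; rewrite h1 h2 h3.
clear h1 h2 h3.
move: z hz; apply: (fin7 (fun z => hedge x y ==> hedge y z ==> hedge x z ==> (x < 3))).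
move: y hy; apply: (fin7 (fun y => all (fun z => hedge x y ==> hedge y z ==> hedge x z ==> (x < 3)) (iota 0 7))).
move: x hx; apply: (fin7 (fun x => all (fun y => all (fun z => hedge x y ==> hedge y z ==> hedge x z ==> (x < 3)) (iota 0 7)) (iota 0 7))).
by vm_compute.
Qed.

Lemma count_iota7 (P : pred nat) M :
  count P (iota 0 (7 + M)) = count P (iota 0 7) + count P (iota 7 M).
Proof. by rewrite iotaD count_cat. Qed.

Lemma count_hi (P : pred nat) (b : bool) M :
  (forall x, 7 <= x -> P x = b) -> count P (iota 7 M) = b * M.
Proof.
move=> h; rewrite (eq_in_count (a2 := fun _ => b)); last first.
  by move=> x; rewrite mem_iota => /andP[hx _]; exact: h.
have -> : forall s : seq nat, count (fun _ => b) s = b * size s.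
  by elim=> [|a l IH] /=; [rewrite muln0 | rewrite IH; case: b {h IH}; rewrite ?mul1n ?mul0n].
by rewrite size_iota.
Qed.

Lemma deg_H M (v : 'I_(7 + M)) :
  #|[pred u | eHn v u]| = (if clsn v == 2 then 0 else 2).
Proof.
rewrite (card_val _ (fun u => hedge v u)) count_iota7 (@count_hi _ false); last first.
  by move=> x hx; rewrite /hedge (ltnNge x) hx !andbF.
case: (ltnP v 7) => hv.
  have -> : (clsn v == 2) = false by rewrite /clsn hv; case: (v < 3).
  rewrite mul0n addn0; apply/eqP; move: (val v) hv.
  apply: (fin7 (fun x => count (hedge x) (iota 0 7) == 2)); by vm_compute.
have -> : (clsn v == 2) = true by rewrite /clsn ltnNge (leq_trans _ hv) // ltnNge hv.
rewrite mul0n addn0 (eq_in_count (a2 := pred0)) ?count_pred0 //.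
by move=> x _; rewrite /hedge ltnNge hv.
Qed.

Lemma ell_G N (v : 'I_N) : ell eF3 (@eGn N) v = false.
Proof.
apply/existsP => -[f /and3P[_ _ /forallP h]].
by have := h (Ordinal (isT : 0 < 3)) => /forallP /(_ (Ordinal (isT : 1 < 3))).
Qed.

Lemma ell_H M (v : 'I_(7 + M)) : ell eF3 eHn v = (v < 3).
Proof.
apply/existsP/idP.
  move=> [f /and3P[_ /codomP[i ->] /forallP h]].
  have adj : forall a b : 'I_3, a != b -> hedge (f a) (f b).
    by move=> a b ab; have := h a => /forallP /(_ b) /eqP; rewrite /eF3 ab /eHn => <-.
  pose o0 := Ordinal (isT : 0 < 3); pose o1 := Ordinal (isT : 1 < 3);
  pose o2 := Ordinal (isT : 2 < 3).
  case: i => -[|[|[|//]]] hi.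
  - by apply: (hedge_tri _ (f o1) (f o2)); apply: adj.
  - by apply: (hedge_tri _ (f o0) (f o2)); apply: adj.
  - by apply: (hedge_tri _ (f o0) (f o1)); apply: adj.
move=> hv.
have h3 : 3 <= 7 + M by apply: leq_trans (leq_addr M 7).
exists [ffun i : 'I_3 => widen_ord h3 i]; apply/and3P; split.
- by apply/injectiveP => a b; rewrite !ffunE => /(congr1 val) /= /val_inj.
- by apply/codomP; exists (Ordinal hv); rewrite ffunE; apply: val_inj.
apply/forallP => a; apply/forallP => b; rewrite !ffunE /eF3 /eHn /=.
move: (ltn_ord a) (ltn_ord b); rewrite -val_eqE /=.
move: (val a) (val b) => x y hx hy.
move: y hy; apply: (finN 3 (fun y => (x != y) == hedge x y)).
move: x hx; apply: (finN 3 (fun x => all (fun y => (x != y) == hedge x y) (iota 0 3))).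
by vm_compute.
Qed.

Definition c0 : colour := GenTree.Node 1 [::].
Definition zc : colour := GenTree.Node 1 [:: GenTree.Leaf false].
Definition ac : colour := GenTree.Node 1 [:: GenTree.Leaf true].
Definition degf (k : nat) : nat := if k == 2 then 0 else 2.

Lemma wl_GP N t (v : 'I_N) : wl eGn (@init_const _) t v = seqc 0 c0 t.
Proof.
apply: (@wl_class _ _ _ (fun _ => 2) degf (fun _ => c0)) => //.
by move=> u; apply: eq_card0.
Qed.

Lemma wl_HP M t (v : 'I_(7 + M)) :
  wl eHn (@init_const _) t v = seqc (degf (clsn v)) c0 t.
Proof.
apply: (@wl_class _ _ _ (fun v : 'I_(7 + M) => clsn v) degf (fun _ => c0)) => //.
- by move=> u w; apply: hedge_cls.
- by move=> u; apply: deg_H.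
Qed.

Lemma wl_GF N t (v : 'I_N) : wl eGn (init_F eF3 eGn) t v = seqc 0 zc t.
Proof.
apply: (@wl_class _ _ _ (fun _ => 2) degf (fun _ => zc)) => //.
- by move=> u; rewrite /init_F ell_G.
- by move=> u; apply: eq_card0.
Qed.

Lemma wl_HF M t (v : 'I_(7 + M)) :
  wl eHn (init_F eF3 eHn) t v =
  seqc (degf (clsn v)) (if clsn v == 0 then ac else zc) t.
Proof.
apply: (@wl_class _ _ _ (fun v : 'I_(7 + M) => clsn v) degf
          (fun k => if k == 0 then ac else zc)) => //.
- by move=> u; rewrite /init_F ell_H /clsn; case: (u < 3) => //; case: (u < 7).
- by move=> u w; apply: hedge_cls.
- by move=> u; apply: deg_H.
Qed.

Local Open Scope ring_scope.

Lemma seqc_S d c t : seqc d c t.+1 = GenTree.Node 0 (seqc d c t :: nseq d (seqc d c t)).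
Proof. by rewrite /= /RELABEL sort_nseq. Qed.

Lemma e20 c c' t : (seqc 2 c t.+1 == seqc 0 c' t.+1) = false.
Proof. by apply/eqP; rewrite !seqc_S. Qed.
Lemma e02 c c' t : (seqc 0 c t.+1 == seqc 2 c' t.+1) = false.
Proof. by apply/eqP; rewrite !seqc_S. Qed.
Lemma eaz t : (seqc 2 ac t == seqc 2 zc t) = false.
Proof.
elim: t => [|t IH]; first by [].
by apply/eqP; rewrite !seqc_S => -[] /eqP; rewrite IH.
Qed.
Lemma eza t : (seqc 2 zc t == seqc 2 ac t) = false.
Proof. by rewrite eq_sym eaz. Qed.

Lemma cnt_H M (k : nat -> colour) (colH : 'I_(7 + M) -> colour) c :
  (forall v, colH v = k (clsn v)) ->
  #|[pred v | colH v == c]| = (3 * (k 0 == c) + 4 * (k 1 == c) + M * (k 2 == c))%N.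
Proof.
move=> h.
have hc := card_val (7 + M) (fun x => k (clsn x) == c).
rewrite (eq_card (B := [pred v : 'I_(7 + M) | k (clsn v) == c])); last first.
  by move=> v; rewrite !inE h.
rewrite hc count_iota7 (@count_hi _ (k 2 == c)); last first.
  by move=> x hx; rewrite /clsn ltnNge (leq_trans _ hx) // ltnNge hx.
rewrite [(_ * M)%N]mulnC /=.
by case: (k 0 == c); case: (k 1 == c).
Qed.

Lemma cnt_G N (colG : 'I_N -> colour) g c :
  (forall v, colG v = g) -> #|[pred v | colG v == c]| = (N * (g == c))%N.
Proof.
move=> h; case: (g =P c) => [<-|ne] /=.
  by rewrite muln1 -[RHS]card_ord; apply: eq_card => v; rewrite !inE h eqxx.
by rewrite muln0; apply: eq_card0 => v; rewrite !inE h; apply/eqP.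
Qed.

Lemma round_sum M (hM : (0 < M)%N) (colG colH : 'I_(7 + M) -> colour)
  (k : nat -> colour) (F : R -> R -> R) :
  (forall v, colG v = k 2%N) -> (forall v, colH v = k (clsn v)) ->
  \sum_(c <- undup ([seq colG v | v <- enum 'I_(7 + M)] ++
                    [seq colH v | v <- enum 'I_(7 + M)]))
     F (#|[pred v | colG v == c]|%:R) (#|[pred v | colH v == c]|%:R)
  = \sum_(c <- undup [:: k 2%N; k 0%N; k 1%N])
     F ((M%:R + 7) * (k 2%N == c)%:R)
       (3 * (k 0%N == c)%:R + 4 * (k 1%N == c)%:R + M%:R * (k 2%N == c)%:R).
Proof.
move=> hG hH.
rewrite (perm_big (undup [:: k 2%N; k 0%N; k 1%N])); last first.
  apply: uniq_perm; rewrite ?undup_uniq // => c; rewrite !mem_undup mem_cat !inE.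
  apply/orP/idP.
    case=> /mapP[v _ ->]; rewrite ?hG ?hH ?eqxx //.
    by rewrite /clsn; case: (v < 3)%N; case: (v < 7)%N; rewrite eqxx ?orbT.
  have o7 : (7 < 7 + M)%N by rewrite -[X in (X < _)%N]addn0 ltn_add2l.
  have o0 : (0 < 7 + M)%N by [].
  have o3 : (3 < 7 + M)%N by apply: leq_trans o7.
  case/or3P => /eqP ->.
  - by left; apply/mapP; exists (Ordinal o7); rewrite ?mem_enum ?hG.
  - by right; apply/mapP; exists (Ordinal o0); rewrite ?mem_enum ?hH.
  - by right; apply/mapP; exists (Ordinal o3); rewrite ?mem_enum ?hH.
apply: eq_big_seq => c _.
rewrite (cnt_G _ _ _ _ hG) (cnt_H _ _ _ _ hH).
by congr F; rewrite !natrD !natrM ?natrD; ring.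
Qed.

Lemma gen_1 M (hM : (0 < M)%N) (colG colH : 'I_(7 + M) -> colour) (A : colour) (F : R -> R -> R) :
  (forall v, colG v = A) -> (forall v, colH v = A) ->
  \sum_(c <- undup ([seq colG v | v <- enum 'I_(7 + M)] ++
                    [seq colH v | v <- enum 'I_(7 + M)]))
     F (#|[pred v | colG v == c]|%:R) (#|[pred v | colH v == c]|%:R)
  = F (M%:R + 7) (M%:R + 7).
Proof.
move=> hG hH; rewrite (@round_sum M hM colG colH (fun _ => A)) //=.
rewrite !inE eqxx /= big_cons big_nil addr0 eqxx /=.
by congr F; rewrite ?eqxx /=; ring.
Qed.

Lemma gen_P1 M (hM : (0 < M)%N) (colG colH : 'I_(7 + M) -> colour) (A B : colour)
  (F : R -> R -> R) :
  (A == B) = false ->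
  (forall v, colG v = A) -> (forall v, colH v = if clsn v == 2%N then A else B) ->
  \sum_(c <- undup ([seq colG v | v <- enum 'I_(7 + M)] ++
                    [seq colH v | v <- enum 'I_(7 + M)]))
     F (#|[pred v | colG v == c]|%:R) (#|[pred v | colH v == c]|%:R)
  = F (M%:R + 7) (M%:R) + F 0 7.
Proof.
move=> ab hG hH.
rewrite (@round_sum M hM colG colH (fun i => if i == 2%N then A else B)) //=.
have ba : (B == A) = false by rewrite eq_sym.
rewrite !inE ab eqxx /= !big_cons big_nil addr0 ab ba eqxx /=.
congr (F _ _ + F _ _); rewrite ?eqxx /=; ring.
Qed.

Lemma gen_F0 M (hM : (0 < M)%N) (colG colH : 'I_(7 + M) -> colour) (A B : colour)
  (F : R -> R -> R) :
  (A == B) = false ->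
  (forall v, colG v = A) -> (forall v, colH v = if clsn v == 0%N then B else A) ->
  \sum_(c <- undup ([seq colG v | v <- enum 'I_(7 + M)] ++
                    [seq colH v | v <- enum 'I_(7 + M)]))
     F (#|[pred v | colG v == c]|%:R) (#|[pred v | colH v == c]|%:R)
  = F 0 3 + F (M%:R + 7) (M%:R + 4).
Proof.
move=> ab hG hH.
rewrite (@round_sum M hM colG colH (fun i => if i == 0%N then B else A)) //=.
have ba : (B == A) = false by rewrite eq_sym.
rewrite !inE ab eqxx /= ba /= !big_cons big_nil addr0 ab ba eqxx /=.
congr (F _ _ + F _ _); rewrite ?eqxx /=; ring.
Qed.

Lemma gen_F1 M (hM : (0 < M)%N) (colG colH : 'I_(7 + M) -> colour) (A B C : colour)
  (F : R -> R -> R) :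
  (A == B) = false -> (A == C) = false -> (B == C) = false ->
  (forall v, colG v = A) ->
  (forall v, colH v = if clsn v == 0%N then B else if clsn v == 1%N then C else A) ->
  \sum_(c <- undup ([seq colG v | v <- enum 'I_(7 + M)] ++
                    [seq colH v | v <- enum 'I_(7 + M)]))
     F (#|[pred v | colG v == c]|%:R) (#|[pred v | colH v == c]|%:R)
  = F (M%:R + 7) (M%:R) + F 0 3 + F 0 4.
Proof.
move=> ab ac bc hG hH.
rewrite (@round_sum M hM colG colH
   (fun i => if i == 0%N then B else if i == 1%N then C else A)) //=.
have ba : (B == A) = false by rewrite eq_sym.
have ca : (C == A) = false by rewrite eq_sym.
have cb : (C == B) = false by rewrite eq_sym.
rewrite !inE ab ac bc /= !big_cons big_nil addr0 ab ba ac ca bc cb eqxx /= addrA.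
congr (F _ _ + F _ _ + F _ _); rewrite ?eqxx /=; ring.
Qed.
Lemma sum_sq_split (s : seq (R * R)) (a b : R) :
  \sum_(xy <- s) (xy.1 / a - xy.2 / b) ^+ 2 =
  (\sum_(xy <- s) xy.1 ^+ 2) * a^-1 ^+ 2 + (\sum_(xy <- s) xy.2 ^+ 2) * b^-1 ^+ 2
  - 2 * (\sum_(xy <- s) xy.1 * xy.2) * a^-1 * b^-1.
Proof.
elim: s => [|xy s IH]; first by rewrite !big_nil; ring.
rewrite !big_cons IH; ring.
Qed.

Lemma sqrt_ratio (X Y Z : R) : 0 < X -> 0 < Y -> 0 <= Z ->
  Z * (Num.sqrt X)^-1 * (Num.sqrt Y)^-1 = Num.sqrt (Z ^+ 2 / (X * Y)).
Proof.
move=> hX hY hZ.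
rewrite sqrtrM ?sqr_ge0 // sqrtr_sqr ger0_norm // sqrtrV ?mulr_ge0 ?ltW //.
by rewrite sqrtrM ?ltW // invfM mulrA.
Qed.

Lemma cmp (X Y1 Y2 Z1 Z2 : R) : 0 < X -> 0 < Y1 -> 0 < Y2 -> 0 <= Z1 -> 0 <= Z2 ->
  Z1 ^+ 2 * Y2 < Z2 ^+ 2 * Y1 -> Z1 ^+ 2 < X * Y1 ->
  Num.sqrt (2 - 2 * (Z2 * (Num.sqrt X)^-1 * (Num.sqrt Y2)^-1))
  < Num.sqrt (2 - 2 * (Z1 * (Num.sqrt X)^-1 * (Num.sqrt Y1)^-1)).
Proof.
move=> hX hY1 hY2 hZ1 hZ2 h1 h2.
rewrite !sqrt_ratio //.
have q1 : Num.sqrt (Z1 ^+ 2 / (X * Y1)) < 1.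
  by rewrite -sqrtr1 ltr_sqrt // ltr_pdivrMr ?mulr_gt0 // mul1r.
have q2 : Num.sqrt (Z1 ^+ 2 / (X * Y1)) < Num.sqrt (Z2 ^+ 2 / (X * Y2)).
  have hz : 0 < Z2 ^+ 2.
    by rewrite -(pmulr_lgt0 _ hY1); apply: le_lt_trans h1; rewrite mulr_ge0 ?sqr_ge0 ?ltW.
  have hp : 0 < Z2 ^+ 2 / (X * Y2) by apply: divr_gt0 => //; apply: mulr_gt0.
  rewrite ltr_sqrt //.
  rewrite ltr_pdivrMr ?mulr_gt0 // mulrAC ltr_pdivlMr ?mulr_gt0 //.
  by rewrite [X * Y2]mulrC [X * Y1]mulrC !mulrA ltr_pM2r.
rewrite ltr_sqrt; lra.
Qed.

Lemma poly1 (m T : R) : 13 <= m -> 1 <= T ->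
  ((m+7) * (m+7 + T * m))^+2 < (T+1)*(m+7)^+2 * ((m+7)^+2 + T*(m^+2+49)).
Proof. move=> ha hb. nra. Qed.
Lemma poly2 (m T : R) : 13 <= m -> 1 <= T ->
  (m+7 + T * m)^+2 * ((m+4)^+2 + 9 + T*(m^+2+25)) < (m+4+T * m)^+2 * ((m+7)^+2 + T*(m^+2+49)).
Proof. move=> ha hb. nra. Qed.

Lemma zip_flat (I : Type) (s : seq nat) (L : nat -> seq I) (f g : nat -> I -> R) :
  zip (flatten [seq [seq f t c | c <- L t] | t <- s])
      (flatten [seq [seq g t c | c <- L t] | t <- s]) =
  flatten [seq [seq (f t c, g t c) | c <- L t] | t <- s].
Proof. by elim: s => //= t s IH; rewrite zip_cat ?size_map // zip_map IH. Qed.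

Lemma sum_flat (I : Type) (s : seq nat) (L : nat -> seq I) (f : nat -> I -> R)
  (H : R -> R) :
  \sum_(x <- flatten [seq [seq f t c | c <- L t] | t <- s]) H x =
  \sum_(t <- s) \sum_(c <- L t) H (f t c).
Proof.
rewrite big_flatten big_map; apply: eq_bigr => t _; by rewrite big_map.
Qed.

Lemma sum_flat2 (I : Type) (s : seq nat) (L : nat -> seq I) (f g : nat -> I -> R)
  (H : R * R -> R) :
  \sum_(x <- flatten [seq [seq (f t c, g t c) | c <- L t] | t <- s]) H x =
  \sum_(t <- s) \sum_(c <- L t) H (f t c, g t c).
Proof.
rewrite big_flatten big_map; apply: eq_bigr => t _; by rewrite big_map.
Qed.

Lemma normdist_gen (I : Type) (s : seq nat) (L : nat -> seq I) (f g : nat -> I -> R)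
  (X Y Z : R) :
  X = \sum_(t <- s) \sum_(c <- L t) f t c ^+ 2 ->
  Y = \sum_(t <- s) \sum_(c <- L t) g t c ^+ 2 ->
  Z = \sum_(t <- s) \sum_(c <- L t) f t c * g t c ->
  0 < X -> 0 < Y ->
  normdist (flatten [seq [seq f t c | c <- L t] | t <- s],
            flatten [seq [seq g t c | c <- L t] | t <- s])
  = Num.sqrt (2 - 2 * (Z * (Num.sqrt X)^-1 * (Num.sqrt Y)^-1)).
Proof.
move=> hX hY hZ X0 Y0.
rewrite /normdist /enorm /= zip_flat sum_sq_split !sum_flat2 !sum_flat /=.
rewrite -hX -hY -hZ !exprVn !sqr_sqrtr ?ltW // !mulfV ?gt_eqF //.
congr Num.sqrt; ring.
Qed.

Lemma sum_rounds (H : nat -> R) T K :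
  (forall t, (0 < t)%N -> H t = K) ->
  \sum_(t <- iota 0 T.+1) H t = H 0%N + T%:R * K.
Proof.
move=> h; rewrite /= big_cons.
have -> : iota 1 T = index_iota 1 T.+1 by rewrite /index_iota subSS subn0.
rewrite (eq_big_nat _ _ (F2 := fun _ => K)); last by move=> i /andP[hi _]; apply: h.
by rewrite sumr_const_nat subSS subn0 mulr_natl.
Qed.

Lemma zc_ac : (zc == ac) = false. Proof. by []. Qed.

Lemma roundF M (hM : (0 < M)%N) (F : R -> R -> R) t :
  \sum_(c <- colours_at (@eGn (7 + M)) (init_F eF3 (@eGn (7 + M))) (@eHn (7 + M)) (init_F eF3 (@eHn (7 + M))) t)
     F (#|[pred v : 'I_(7 + M) | wl eGn (init_F eF3 eGn) t v == c]|%:R)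
       (#|[pred v : 'I_(7 + M) | wl eHn (init_F eF3 eHn) t v == c]|%:R)
  = if t == 0%N then F 0 3 + F (M%:R + 7) (M%:R + 4)
    else F (M%:R + 7) (M%:R) + F 0 3 + F 0 4.
Proof.
rewrite /colours_at; case: t => [|t].
  apply: (@gen_F0 M hM _ _ zc ac) => //.
  - by move=> v; rewrite wl_GF.
  - by move=> v; rewrite wl_HF; case: (clsn v == 0%N).
apply: (@gen_F1 M hM _ _ (seqc 0 zc t.+1) (seqc 2 ac t.+1) (seqc 2 zc t.+1)).
- exact: e02.
- exact: e02.
- exact: eaz.
- by move=> v; rewrite wl_GF.
- move=> v; rewrite wl_HF /degf.
  by rewrite /clsn; case: (v < 3)%N => //; case: (v < 7)%N.
Qed.

Lemma roundP M (hM : (0 < M)%N) (F : R -> R -> R) t :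
  \sum_(c <- colours_at (@eGn (7 + M)) (@init_const _) (@eHn (7 + M)) (@init_const _) t)
     F (#|[pred v : 'I_(7 + M) | wl eGn (@init_const _) t v == c]|%:R)
       (#|[pred v : 'I_(7 + M) | wl eHn (@init_const _) t v == c]|%:R)
  = if t == 0%N then F (M%:R + 7) (M%:R + 7)
    else F (M%:R + 7) (M%:R) + F 0 7.
Proof.
rewrite /colours_at; case: t => [|t].
  apply: (@gen_1 M hM _ _ c0) => //.
apply: (@gen_P1 M hM _ _ (seqc 0 c0 t.+1) (seqc 2 c0 t.+1)).
- exact: e02.
- by move=> v; rewrite wl_GP.
- move=> v; rewrite wl_HP /degf.
  by case: (clsn v == 2%N).
Qed.

Lemma sum_rounds2 (H : nat -> R) T K0 K :
  H 0%N = K0 -> (forall t, H t.+1 = K) ->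
  \sum_(t <- iota 0 T.+1) H t = K0 + T%:R * K.
Proof. by move=> h0 h; rewrite (@sum_rounds H T K) ?h0 // => -[|t]. Qed.

Lemma sumsF M (hM : (0 < M)%N) (F : R -> R -> R) T :
  \sum_(t <- iota 0 T.+1)
  \sum_(c <- colours_at (@eGn (7 + M)) (init_F eF3 (@eGn (7 + M))) (@eHn (7 + M)) (init_F eF3 (@eHn (7 + M))) t)
     F (#|[pred v : 'I_(7 + M) | wl eGn (init_F eF3 eGn) t v == c]|%:R)
       (#|[pred v : 'I_(7 + M) | wl eHn (init_F eF3 eHn) t v == c]|%:R)
  = F 0 3 + F (M%:R + 7) (M%:R + 4) +
    T%:R * (F (M%:R + 7) (M%:R) + F 0 3 + F 0 4).
Proof.
apply: sum_rounds2; first by rewrite roundF.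
by move=> t; rewrite roundF.
Qed.

Lemma sumsP M (hM : (0 < M)%N) (F : R -> R -> R) T :
  \sum_(t <- iota 0 T.+1)
  \sum_(c <- colours_at (@eGn (7 + M)) (@init_const _) (@eHn (7 + M)) (@init_const _) t)
     F (#|[pred v : 'I_(7 + M) | wl eGn (@init_const _) t v == c]|%:R)
       (#|[pred v : 'I_(7 + M) | wl eHn (@init_const _) t v == c]|%:R)
  = F (M%:R + 7) (M%:R + 7) + T%:R * (F (M%:R + 7) (M%:R) + F 0 7).
Proof.
apply: sum_rounds2; first by rewrite roundP.
by move=> t; rewrite roundP.
Qed.

Theorem proposition14 :
  forall n : nat, (10 <= n)%N ->
  exists (eG eH : rel 'I_(2 * n)) (k : nat) (eF : rel 'I_k),
    [/\ simple_graph eG, simple_graph eH, simple_graph eF &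
      forall T : nat, (0 < T)%N ->
        normdist (feat_pair eG (init_F eF eG) eH (init_F eF eH) T)
        < normdist (feat_pair eG (@init_const _) eH (@init_const _) T)].
Proof.
move=> n hn.
have [M hM13 hNM] : exists2 M, (13 <= M)%N & (2 * n = 7 + M)%N.
  by exists (2 * n - 7)%N; lia.
rewrite hNM.
have hM : (0 < M)%N by apply: leq_trans hM13.
exists eGn, eHn, 3%N, eF3; split.
- by split.
- by split; [move=> u v; apply: hedge_sym | move=> u; apply: hedge_irr].
- by split; [move=> i j; rewrite /eF3 eq_sym | move=> i; rewrite /eF3 eqxx].
move=> T hT.
have m13 : 13 <= M%:R :> R by rewrite (ler_nat R 13).
have t1 : 1 <= T%:R :> R by rewrite ler1n.
set m : R := M%:R in m13 *; set t : R := T%:R in t1 *.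
pose X := (t + 1) * (m + 7) ^+ 2.
pose YP := (m + 7) ^+ 2 + t * (m ^+ 2 + 49).
pose ZP := (m + 7) * (m + 7 + t * m).
pose YF := (m + 4) ^+ 2 + 9 + t * (m ^+ 2 + 25).
pose ZF := (m + 7) * (m + 4 + t * m).
have X0 : 0 < X by rewrite /X; apply: mulr_gt0; [lra | apply: exprn_gt0; lra].
have YP0 : 0 < YP by rewrite /YP; nra.
have YF0 : 0 < YF by rewrite /YF; nra.
rewrite /feat_pair (@normdist_gen _ _ _ _ _ X YF ZF); first last.
- exact: YF0.
- exact: X0.
- by rewrite (@sumsF M hM (fun x y => x * y)) /ZF /m /t /=; ring.
- by rewrite (@sumsF M hM (fun x y => y ^+ 2)) /YF /m /t /=; ring.
- by rewrite (@sumsF M hM (fun x y => x ^+ 2)) /X /m /t /=; ring.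
rewrite (@normdist_gen _ _ _ _ _ X YP ZP); first last.
- exact: YP0.
- exact: X0.
- by rewrite (@sumsP M hM (fun x y => x * y)) /ZP /m /t /=; ring.
- by rewrite (@sumsP M hM (fun x y => y ^+ 2)) /YP /m /t /=; ring.
- by rewrite (@sumsP M hM (fun x y => x ^+ 2)) /X /m /t /=; ring.
apply: cmp => //.
- rewrite /ZP; apply: mulr_ge0; first lra.
  by apply: addr_ge0; [lra | apply: mulr_ge0; lra].
- rewrite /ZF; apply: mulr_ge0; first lra.
  by apply: addr_ge0; [lra | apply: mulr_ge0; lra].
- rewrite /ZP /ZF !exprMn -[_ * _ * YF]mulrA -[_ * _ * YP]mulrA ltr_pM2l; first exact: poly2.
  by apply: exprn_gt0; lra.
- exact: poly1.
Qed.
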